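(* Let $\Gamma_1,\Gamma_2$ be propositional theories such that no atom occurring in $\Gamma_1$ is a head atom of $\Gamma_2$, and let $S$ be a set of atoms containing all head atoms of $\Gamma_1$ and no head atoms of $\Gamma_2$. Then a set $X$ of atoms is a stable model of $\Gamma_1\cup\Gamma_2$ if and only if $X\cap S$ is a stable model of $\Gamma_1$ and $X$ is a stable model of the theory $(X\cap S)\cup\Gamma_2$ (where each atom of $X\cap S$ is regarded as a formula).
   Context: Formulas are built from atoms and $\bot$ using $\wedge,\vee,\to$; $\top$, $\neg F$, $F\leftrightarrow G$ abbreviate $\bot\to\bot$, $F\to\bot$, $(F\to G)\wedge(G\to F)$. Reduct: $\bot^X=\bot$; $a^X=a$ if $a\in X$, else $\bot$; $(F\otimes G)^X=F^X\otimes G^X$ if $X\models F\otimes G$, else $\bot$; $\Gamma^X=\{F^X:F\in\Gamma\}$. $X$ is a stable model of $\Gamma$ if $X\models\Gamma^X$ and no proper subset of $X$ satisfies $\Gamma^X$. An occurrence of an atom is strictly positive if it lies in the antecedent of no implication (abbreviations expanded); a head atom of a theory is an atom with a strictly positive occurrence in it. *)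

(* Defs.v *)
(* Propositional formulas over an arbitrary type of atoms,
   Ferraris-style reduct and stable models. *)
From Stdlib Require Import Classical ClassicalEpsilon.
Set Implicit Arguments.

Section Formulas.
Variable A : Type.

Inductive form : Type :=
| Bot : form
| Atom : A -> form
| And : form -> form -> form
| Or : form -> form -> form
| Imp : form -> form -> form.

Definition aset := A -> Prop.
Definition theory := form -> Prop.

Fixpoint sat (X : aset) (F : form) : Prop :=
  match F with
  | Bot => False
  | Atom a => X a
  | And F G => sat X F /\ sat X G
  | Or F G => sat X F \/ sat X G
  | Imp F G => sat X F -> sat X G
  end.

Definition sat_th (X : aset) (T : theory) : Prop := forall F, T F -> sat X F.

Fixpoint reduct (X : aset) (F : form) : form :=
  match F with
  | Bot => Bot
  | Atom a => if excluded_middle_informative (X a) then Atom a else Bot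
  | And F1 G1 => if excluded_middle_informative (sat X (And F1 G1))
                 then And (reduct X F1) (reduct X G1) else Bot
  | Or F1 G1 => if excluded_middle_informative (sat X (Or F1 G1))
                then Or (reduct X F1) (reduct X G1) else Bot
  | Imp F1 G1 => if excluded_middle_informative (sat X (Imp F1 G1))
                 then Imp (reduct X F1) (reduct X G1) else Bot
  end.

Definition reduct_th (X : aset) (T : theory) : theory :=
  fun G => exists F, T F /\ G = reduct X F.

Definition subset (X Y : aset) : Prop := forall a, X a -> Y a.
Definition proper_subset (Y X : aset) : Prop := subset Y X /\ ~ subset X Y.

Definition stable_model (X : aset) (T : theory) : Prop :=
  sat_th X (reduct_th X T) /\
  ~ (exists Y, proper_subset Y X /\ sat_th Y (reduct_th X T)).

Fixpoint occurs (a : A) (F : form) : Prop :=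
  match F with
  | Bot => False
  | Atom b => a = b
  | And F G | Or F G | Imp F G => occurs a F \/ occurs a G
  end.

Fixpoint strictly_pos (a : A) (F : form) : Prop :=
  match F with
  | Bot => False
  | Atom b => a = b
  | And F G | Or F G => strictly_pos a F \/ strictly_pos a G
  | Imp _ G => strictly_pos a G
  end.

Definition occurs_th (a : A) (T : theory) : Prop := exists F, T F /\ occurs a F.
Definition head_atom (a : A) (T : theory) : Prop := exists F, T F /\ strictly_pos a F.

Definition th_union (T1 T2 : theory) : theory := fun F => T1 F \/ T2 F.
Definition aset_inter (X Y : aset) : aset := fun a => X a /\ Y a.
Definition atoms_th (X : aset) : theory := fun F => exists a, X a /\ F = Atom a.

End Formulas.

(* Main.v *)
Require Import Defs.
From Stdlib Require Import Classical ClassicalEpsilon.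

Lemma sat_agree A (F : form A) : forall X Y : aset A,
  (forall a, occurs a F -> (X a <-> Y a)) -> (sat X F <-> sat Y F).
Proof.
  induction F; intros X Y H; simpl in *.
  - tauto.
  - apply (H a eq_refl).
  - rewrite (IHF1 X Y), (IHF2 X Y); [tauto| |]; intros; apply H; auto.
  - rewrite (IHF1 X Y), (IHF2 X Y); [tauto| |]; intros; apply H; auto.
  - rewrite (IHF1 X Y), (IHF2 X Y); [tauto| |]; intros; apply H; auto.
Qed.

Lemma reduct_agree A (F : form A) : forall X X' : aset A,
  (forall a, occurs a F -> (X a <-> X' a)) -> reduct X F = reduct X' F.
Proof.
  induction F; intros X X' H; simpl.
  - reflexivity.
  - destruct (excluded_middle_informative (X a)) as [h|h];
    destruct (excluded_middle_informative (X' a)) as [h'|h']; try reflexivity;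
    exfalso; firstorder.
  - assert (s := @sat_agree _ (And F1 F2) X X' H).
    rewrite (IHF1 X X'), (IHF2 X X') by (intros; apply H; simpl; auto).
    simpl in s; repeat match goal with |- context [excluded_middle_informative ?P] =>
      destruct (excluded_middle_informative P) end; try reflexivity; tauto.
  - assert (s := @sat_agree _ (Or F1 F2) X X' H).
    rewrite (IHF1 X X'), (IHF2 X X') by (intros; apply H; simpl; auto).
    simpl in s; repeat match goal with |- context [excluded_middle_informative ?P] =>
      destruct (excluded_middle_informative P) end; try reflexivity; tauto.
  - assert (s := @sat_agree _ (Imp F1 F2) X X' H).
    rewrite (IHF1 X X'), (IHF2 X X') by (intros; apply H; simpl; auto).
    simpl in s; repeat match goal with |- context [excluded_middle_informative ?P] =>
      destruct (excluded_middle_informative P) end; try reflexivity; tauto.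
Qed.

Lemma occurs_reduct A (F : form A) : forall (X : aset A) a,
  occurs a (reduct X F) -> occurs a F.
Proof.
  induction F; intros X b; simpl; auto;
  match goal with |- context [excluded_middle_informative ?P] =>
    destruct (excluded_middle_informative P) end; simpl; firstorder.
Qed.

Lemma sat_reduct A (F : form A) : forall X Y : aset A,
  sat Y (reduct X F) -> sat X F.
Proof.
  induction F; intros X Y; simpl; auto;
  match goal with |- context [excluded_middle_informative ?P] =>
    destruct (excluded_middle_informative P) end; simpl; tauto.
Qed.

Lemma sp_lemma A (F : form A) : forall X Y : aset A,
  sat X F -> subset Y X -> (forall a, X a -> strictly_pos a F -> Y a) ->
  sat Y (reduct X F).
Proof.
  induction F; intros X Y HF HYX Hsp; simpl in *.
  - contradiction.
  - destruct (excluded_middle_informative (X a)); simpl; [apply Hsp; auto | contradiction].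
  - destruct (excluded_middle_informative (sat X F1 /\ sat X F2)) as [h|h]; [|tauto].
    simpl; split; [apply IHF1|apply IHF2]; try tauto; intros; apply Hsp; auto.
  - destruct (excluded_middle_informative (sat X F1 \/ sat X F2)) as [h|h]; [|tauto].
    simpl; destruct HF; [left; apply IHF1|right; apply IHF2]; auto; intros; apply Hsp; auto.
  - destruct (excluded_middle_informative (sat X F1 -> sat X F2)) as [h|h]; [|tauto].
    simpl; intro HY1; apply IHF2; auto. apply HF; eapply sat_reduct; eauto.
Qed.

Lemma stable_heads A (T : theory A) (X : aset A) :
  stable_model X T -> forall a, X a -> head_atom a T.
Proof.
  intros [H1 H2].
  set (Y := fun a => X a /\ head_atom a T).
  assert (HY : sat_th Y (reduct_th X T)).
  { intros G [F [HF ->]]. apply sp_lemma.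
    - eapply sat_reduct. apply H1. exists F; auto.
    - intros a [h _]; exact h.
    - intros a h hs; split; auto; exists F; auto. }
  assert (HXY : subset X Y).
  { apply NNPP; intro hn; apply H2; exists Y; split; auto; split; auto. intros a [h _]; exact h. }
  intros a ha; apply (HXY a ha).
Qed.

Theorem proposition10 (A : Type) (G1 G2 : theory A) (S : aset A) :
  (forall a, occurs_th a G1 -> ~ head_atom a G2) ->
  (forall a, head_atom a G1 -> S a) ->
  (forall a, head_atom a G2 -> ~ S a) ->
  forall X : aset A,
    stable_model X (th_union G1 G2) <->
    (stable_model (aset_inter X S) G1 /\
     stable_model X (th_union (atoms_th (aset_inter X S)) G2)).
Proof.
  intros HG1 HH1 HH2 X. split.
  - intros HX. pose proof (@stable_heads _ _ _ HX) as Hh. destruct HX as [Hs Hmin].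
    assert (key : forall a, occurs_th a G1 -> X a -> S a).
    { intros a ho hx. destruct (Hh a hx) as [F [[HF|HF] hs]].
      - apply HH1; exists F; auto.
      - exfalso; apply (HG1 a ho); exists F; auto. }
    assert (agreeF : forall F, G1 F -> forall a, occurs a F -> (X a <-> aset_inter X S a)).
    { intros F HF a ha; unfold aset_inter; split; [|tauto]. intro hx; split; auto.
      apply key; auto; exists F; auto. }
    split.
    + split.
      * intros G [F [HF ->]]. rewrite <- (@reduct_agree _ F X (aset_inter X S)) by (apply agreeF; auto).
        apply (@sat_agree _ (reduct X F) X (aset_inter X S)).
        { intros a ha; apply (agreeF F HF); eapply occurs_reduct; eauto. }
        apply Hs; exists F; split; [left|]; auto.
      * intros [Y [[HYZ HnZY] HY]]. apply Hmin.
        exists (fun a => Y a \/ (X a /\ ~ S a)). split; [split|].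
        { intros a [h|[h _]]; auto. apply (HYZ a h). }
        { intro H; apply HnZY; intros a [hx hs]. destruct (H a hx) as [h|[_ hn]]; tauto. }
        intros G [F [[HF|HF] ->]].
        -- rewrite (@reduct_agree _ F X (aset_inter X S)) by (apply agreeF; auto).
           refine (proj1 (@sat_agree _ (reduct (aset_inter X S) F) Y _ _) (HY _ (ex_intro _ F (conj HF eq_refl)))).
           intros a ha; apply occurs_reduct in ha. split; [auto|].
           intros [h|[hx hns]]; auto. exfalso; apply hns; apply key; auto; exists F; auto.
        -- apply sp_lemma.
           ++ eapply sat_reduct. apply Hs. exists F; split; [right|]; auto.
           ++ intros a [h|[h _]]; auto. apply (HYZ a h).
           ++ intros a hx hsp. right; split; auto. apply HH2; exists F; auto.
    + split.
      * intros G [F [[[a [[hx hs] ->]]|HF] ->]].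
        -- simpl. destruct (excluded_middle_informative (X a)); simpl; tauto.
        -- apply Hs; exists F; split; [right|]; auto.
      * intros [Y [[HYX HnXY] HY]]. apply Hmin; exists Y; split; [split; auto|].
        intros G [F [[HF|HF] ->]].
        -- apply sp_lemma; auto.
           ++ eapply sat_reduct. apply Hs. exists F; split; [left|]; auto.
           ++ intros a hx hsp.
              assert (hS : S a) by (apply HH1; exists F; auto).
              pose proof (HY (reduct X (Atom a))) as h.
              simpl in h. destruct (excluded_middle_informative (X a)); [|contradiction].
              apply h. exists (Atom a); split; [left; exists a; split; auto; split; auto|]. simpl. destruct (excluded_middle_informative (X a)); [reflexivity|contradiction].
        -- apply HY; exists F; split; [right|]; auto.
  - intros [[Hz1 Hzmin] HX2]. pose proof (@stable_heads _ _ _ HX2) as Hh. destruct HX2 as [Hx2 Hxmin].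
    assert (key : forall a, occurs_th a G1 -> X a -> aset_inter X S a).
    { intros a ho hx. destruct (Hh a hx) as [F [[[b [hb ->]]|HF] hs]].
      - simpl in hs; subst; auto.
      - exfalso; apply (HG1 a ho); exists F; auto. }
    assert (agreeF : forall F, G1 F -> forall a, occurs a F -> (X a <-> aset_inter X S a)).
    { intros F HF a ha; unfold aset_inter; split; [|tauto]. intro hx.
      apply key; auto; exists F; auto. }
    split.
    + intros G [F [[HF|HF] ->]].
      * rewrite (@reduct_agree _ F X (aset_inter X S)) by (apply agreeF; auto).
        apply (proj2 (@sat_agree _ (reduct (aset_inter X S) F) X (aset_inter X S) ltac:(intros a ha; apply (agreeF F HF); eapply occurs_reduct; eauto))).
        apply Hz1; exists F; auto.
      * apply Hx2; exists F; split; [right|]; auto.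
    + intros [Y [[HYX HnXY] HY]].
      destruct (classic (subset (aset_inter X S) Y)) as [hZY|hZY].
      * apply Hxmin; exists Y; split; [split; auto|].
        intros G [F [[[a [ha ->]]|HF] ->]].
        -- simpl. destruct (excluded_middle_informative (X a)); simpl; auto.
        -- apply HY; exists F; split; [right|]; auto.
      * apply Hzmin; exists (aset_inter Y S). split; [split|].
        { intros a [hy hs]; split; auto. }
        { intro h; apply hZY; intros a ha; apply (h a ha). }
        intros G [F [HF ->]].
        rewrite <- (@reduct_agree _ F X (aset_inter X S)) by (apply agreeF; auto).
        refine (proj1 (@sat_agree _ (reduct X F) Y _ _) (HY _ (ex_intro _ F (conj (or_introl HF) eq_refl)))).
        intros a ha; apply occurs_reduct in ha. unfold aset_inter; split; [|tauto].
        intro hy; split; auto. apply (key a); auto. exists F; auto.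
Qed.
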